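(* Let $G$ be a connected edge-stable equimatchable graph with at least $3$ vertices. Then $\nu(G)=\nu(G\setminus e)$ for every $e\in E(G)$.
   Context: All graphs are finite and simple. A graph is equimatchable if all its maximal matchings have the same cardinality; an equimatchable graph $G$ is edge-stable if $G\setminus e$ (delete edge $e$, keep vertices) is equimatchable for every $e\in E(G)$. $\nu(H)$ is the maximum size of a matching of $H$. *)

(* Defs.v *)
(* A finite simple graph on vertex type V is given by its
   edge set E : {set {set V}}, every edge being a 2-element vertex set. *)
From mathcomp Require Import all_boot all_order.
Set Implicit Arguments. Unset Strict Implicit. Unset Printing Implicit Defensive.

Section Graphs.
Variable V : finType.

Definition simple_graph (E : {set {set V}}) : Prop :=
  forall e, e \in E -> #|e| = 2.

Definition adj (E : {set {set V}}) : rel V :=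
  fun x y => (x != y) && ([set x; y] \in E).

Definition connected_graph (E : {set {set V}}) : Prop :=
  forall x y : V, connect (adj E) x y.

Definition matchingb (E M : {set {set V}}) : bool :=
  (M \subset E) &&
  [forall e in M, forall f in M, (e != f) ==> [disjoint e & f]].

Definition matching (E M : {set {set V}}) : Prop := matchingb E M.

Definition maximal_matching (E M : {set {set V}}) : Prop :=
  matching E M /\ (forall f, f \in E -> f \notin M -> ~ matching E (f |: M)).

Definition nu (E : {set {set V}}) : nat :=
  \max_(M : {set {set V}} | matchingb E M) #|M|.

Definition equimatchable (E : {set {set V}}) : Prop :=
  forall M1 M2, maximal_matching E M1 -> maximal_matching E M2 -> #|M1| = #|M2|.

Definition edge_stable (E : {set {set V}}) : Prop :=
  equimatchable E /\ forall e, e \in E -> equimatchable (E :\ e).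

End Graphs.

(* Main.v *)
Require Import Defs.
From mathcomp Require Import all_boot all_order.
Set Implicit Arguments. Unset Strict Implicit. Unset Printing Implicit Defensive.

Lemma exit_path (V : finType) (r : rel V) (A : {set V}) x y :
  connect r x y -> x \in A -> y \notin A ->
  exists a b, [/\ a \in A, b \notin A & r a b].
Proof.
move/connectP=> [p]; elim: p x => [|z p IH] x /=.
  by move=> _ -> ->.
move=> /andP[rxz pz] ly xA yA.
case zA: (z \in A); first exact: (IH z pz ly zA yA).
by exists x, z; rewrite zA.
Qed.

Lemma max_maximal (V : finType) (E M : {set {set V}}) (P : pred {set {set V}}) :
  matchingb E M ->
  (forall g, g \in E -> g \notin M -> matchingb E (g |: M) -> P (g |: M)) ->
  (forall N, matchingb E N -> P N -> #|N| <= #|M|) ->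
  maximal_matching E M.
Proof.
move=> mM HP Hmax; split=> // g gE gM mg.
have := Hmax _ mg (HP g gE gM mg).
by rewrite cardsU1 gM add1n ltnn.
Qed.

Theorem proposition2p1 (V : finType) (E : {set {set V}}) :
  simple_graph E -> connected_graph E -> 3 <= #|V| -> edge_stable E ->
  forall e, e \in E -> nu E = nu (E :\ e).
Proof.
move=> sE cE cV [eqE _] e eE.
have sub_m : forall M, matchingb (E :\ e) M -> matchingb E M.
  move=> M /andP[sM pM]; apply/andP; split=> //.
  by apply: subset_trans sM _; apply: subsetDl.
have le1 : nu (E :\ e) <= nu E.
  apply/bigmax_leqP => M mM; exact: (leq_bigmax_cond _ (sub_m _ mM)).
have m0 : matchingb E set0.
  by apply/andP; split; [apply: sub0set | apply/forallP=> g; rewrite in_set0].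
case: (arg_maxnP (fun M : {set {set V}} => #|M|) m0) => M0 mM0 HM0.
have nuE : nu E = #|M0|.
  apply/eqP; rewrite eqn_leq; apply/andP; split.
    by apply/bigmax_leqP.
  exact: (leq_bigmax_cond _ mM0).
have maxM0 : maximal_matching E M0.
  apply: (@max_maximal _ _ _ (fun _ => true)) => // N mN _; exact: HM0.
have /cards2P [u [v [uv ee]]] : #|e| == 2 by rewrite (sE e eE).
have [w wn] : exists w, w \in ~: e.
  apply/card_gt0P; move: (cardsC e); rewrite (sE e eE) => H.
  by move: cV; rewrite -H; case: #|~: e|.
rewrite in_setC in wn.
have ue : u \in e by rewrite ee !inE eqxx.
have [a [b [ae bn ab]]] := exit_path (cE u w) ue wn.
move: ab => /andP[_ fE].
set f := [set a; b] in fE.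
have af : a \in f by rewrite !inE eqxx.
have fe : f != e.
  by apply/eqP=> fe; move: bn; rewrite -fe !inE eqxx orbT.
have mf : matchingb E [set f].
  apply/andP; split; first by rewrite sub1set.
  apply/forallP=> g; apply/implyP; rewrite inE => /eqP ->.
  apply/forallP=> h; apply/implyP; rewrite inE => /eqP ->.
  by rewrite eqxx.
have fin : f \in [set f] by rewrite inE.
have mf' : matchingb E [set f] && (f \in [set f]) by rewrite mf fin.
case: (@arg_maxnP _ [set f] (fun M => matchingb E M && (f \in M)) (fun M : {set {set V}} => #|M|) mf') => M1 /andP[mM1 fM1] HM1.
have maxM1 : maximal_matching E M1.
  apply: (@max_maximal _ _ _ (fun N => f \in N)) => //.
    by move=> g _ _ _ /=; rewrite in_setU1 fM1 orbT.
  by move=> N mN fN; apply: HM1; rewrite mN fN.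
have eqc := eqE _ _ maxM0 maxM1.
have eM1 : e \notin M1.
  apply/negP=> eM1.
  move: mM1 => /andP[_ /forallP/(_ e)/implyP/(_ eM1)/forallP/(_ f)/implyP/(_ fM1)].
  rewrite eq_sym fe /= => /disjointFr/(_ ae).
  by rewrite af.
have mM1' : matchingb (E :\ e) M1.
  move: mM1 => /andP[sM pM]; apply/andP; split=> //.
  apply/subsetP=> g gM; rewrite in_setD1 (subsetP sM _ gM) andbT.
  by apply/eqP=> ge; move: eM1; rewrite -ge gM.
apply/eqP; rewrite eqn_leq le1 nuE eqc.
rewrite /nu andbT; exact: (leq_bigmax_cond _ mM1').
Qed.
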